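(* Let $G\in\mathrm{C}^2(\mathbb{R})$ be coercive and $p_1<p_2$ with $G'(p_1)<0<G'(p_2)$, and let $L=\frac{G'(p_2)}{G'(p_2)-G'(p_1)}\in(0,1)$. For any $\ell\in(0,\min\{L,1-L\})$ there is $f\in\mathcal{C}(L,\ell)$ such that $\int_0^1 G'(f(x))\,dx=0$.
   Context: $G$ coercive means $G(p)\to\infty$ as $p\to\pm\infty$. $\mathrm{C}^{1,1}(\mathbb{R})$ is the set of $f\in\mathrm{C}^1(\mathbb{R})$ with $f'$ Lipschitz. $\mathcal{C}(L,\ell)$ is the set of $1$-periodic $f\in\mathrm{C}^{1,1}(\mathbb{R})$ with $p_1\le f(x)\le p_2$ for all $x$, $f(x)=p_1$ for $x\in[0,L-\ell]$, and $f(x)=p_2$ for $x\in[L,1-\ell]$. *)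

(* Defs.v *)
From Stdlib Require Import Reals.
From Coquelicot Require Import Coquelicot.
Open Scope R_scope.

Definition C1 (f : R -> R) : Prop :=
  forall x, ex_derive f x /\ continuous (Derive f) x.

Definition C2 (f : R -> R) : Prop := C1 f /\ C1 (Derive f).

Definition C11 (f : R -> R) : Prop :=
  C1 f /\ exists K : R, forall x y, Rabs (Derive f x - Derive f y) <= K * Rabs (x - y).

Definition coercive (G : R -> R) : Prop :=
  filterlim G (Rbar_locally p_infty) (Rbar_locally p_infty) /\
  filterlim G (Rbar_locally m_infty) (Rbar_locally p_infty).

Definition classC (p1 p2 L l : R) (f : R -> R) : Prop :=
  (forall x, f (x + 1) = f x) /\
  C11 f /\
  (forall x, p1 <= f x <= p2) /\
  (forall x, 0 <= x <= L - l -> f x = p1) /\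
  (forall x, L <= x <= 1 - l -> f x = p2).

(* Main.v *)
Require Import Defs.
From Stdlib Require Import Reals.
From Coquelicot Require Import Coquelicot.
From Stdlib Require Import Lra Lia.
Open Scope R_scope.

Definition clamp (u : R) := Rmax 0 (Rmin 1 u).
Definition hS (v : R) := v * v * (3 - 2 * v).
Definition dS (u : R) := 6 * clamp u * (1 - clamp u).
Definition S (u : R) := hS (clamp u).

Lemma clamp_range u : 0 <= clamp u <= 1.
Proof. unfold clamp, Rmax, Rmin; repeat destruct Rle_dec; lra. Qed.
Lemma clamp_id u : 0 <= u <= 1 -> clamp u = u.
Proof. intros; unfold clamp, Rmax, Rmin; repeat destruct Rle_dec; lra. Qed.
Lemma clamp_le0 u : u <= 0 -> clamp u = 0.
Proof. intros; unfold clamp, Rmax, Rmin; repeat destruct Rle_dec; lra. Qed.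
Lemma clamp_ge1 u : 1 <= u -> clamp u = 1.
Proof. intros; unfold clamp, Rmax, Rmin; repeat destruct Rle_dec; lra. Qed.
Lemma clamp_lip x y : Rabs (clamp x - clamp y) <= Rabs (x - y).
Proof. unfold clamp, Rmax, Rmin; repeat destruct Rle_dec; split_Rabs; lra. Qed.
Lemma clamp_mono x y : x <= y -> clamp x <= clamp y.
Proof. intros; unfold clamp, Rmax, Rmin; repeat destruct Rle_dec; lra. Qed.

Lemma lip_cont (g : R -> R) K : (forall x y, Rabs (g x - g y) <= K * Rabs (x - y)) ->
  forall x, continuous g x.
Proof.
  intros H x. apply continuity_pt_filterlim.
  intros eps Heps. exists (eps / (Rabs K + 1)). split.
  { apply Rdiv_lt_0_compat; [lra|]. pose proof (Rabs_pos K); lra. }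
  intros y [_ Hy]. unfold R_dist, Rdist in *. simpl in *.
  specialize (H y x). pose proof (Rabs_pos K). pose proof (Rabs_pos (y - x)).
  assert (K * Rabs (y - x) <= Rabs K * Rabs (y - x)).
  { apply Rmult_le_compat_r; [lra| apply RRle_abs]. }
  assert (Rabs (y - x) * (Rabs K + 1) < eps).
  { apply (Rmult_lt_compat_r (Rabs K + 1)) in Hy; [|lra].
    unfold Rdiv in Hy. rewrite Rmult_assoc, Rinv_l in Hy. unfold Rdist in Hy. lra. lra. }
  unfold Rdist. 
  nra.
Qed.

Lemma dS_lip x y : Rabs (dS x - dS y) <= 6 * Rabs (x - y).
Proof.
  unfold dS. pose proof (clamp_lip x y). pose proof (clamp_range x). pose proof (clamp_range y).
  set (cx := clamp x) in *. set (cy := clamp y) in *.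
  replace (6 * cx * (1 - cx) - 6 * cy * (1 - cy)) with (6 * ((cx - cy) * (1 - cx - cy))) by ring.
  rewrite Rabs_mult, Rabs_mult. rewrite (Rabs_right 6) by lra.
  assert (Rabs (1 - cx - cy) <= 1) by (split_Rabs; lra).
  pose proof (Rabs_pos (cx - cy)). pose proof (Rabs_pos (1 - cx - cy)).
  assert (Rabs (cx - cy) * Rabs (1 - cx - cy) <= Rabs (cx - cy)) by nra. lra.
Qed.
Lemma dS_cont x : continuous dS x.
Proof. apply (lip_cont dS 6). intros; apply dS_lip. Qed.
Lemma dS_range x : 0 <= dS x <= 2.
Proof. unfold dS. pose proof (clamp_range x). nra. Qed.

Lemma scal_R (a b : R) : scal a b = a * b. Proof. reflexivity. Qed.
Lemma plus_R (a b : R) : plus a b = a + b. Proof. reflexivity. Qed.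
Lemma minus_R (a b : R) : minus a b = a - b. Proof. reflexivity. Qed.

Lemma S_int u : S u = RInt dS 0 u.
Proof.
  assert (H01 : forall v, 0 <= v <= 1 -> RInt dS 0 v = hS v).
  { intros v Hv. apply is_RInt_unique.
    replace (hS v) with (minus (hS v) (hS 0)) by (unfold hS, minus, plus, opp; simpl; ring).
    apply (is_RInt_derive hS dS 0 v).
    - intros x Hx. rewrite Rmin_left, Rmax_right in Hx by lra.
      unfold dS. rewrite clamp_id by lra. unfold hS. auto_derive; auto. ring.
    - intros; apply dS_cont. }
  destruct (Rle_dec u 0) as [Hu|Hu].
  - unfold S. rewrite clamp_le0 by lra.
    rewrite (RInt_ext _ (fun _ => 0)).
    + rewrite RInt_const, scal_R. unfold hS; ring.
    + intros x Hx. rewrite Rmin_right, Rmax_left in Hx by lra. unfold dS. rewrite clamp_le0 by lra. cbn; ring.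
  - destruct (Rle_dec u 1) as [Hu1|Hu1].
    + unfold S. rewrite clamp_id by lra. rewrite H01; lra.
    + unfold S. rewrite clamp_ge1 by lra.
      rewrite <- (RInt_Chasles dS 0 1 u).
      * rewrite H01 by lra. rewrite (RInt_ext _ (fun _ => 0)).
        -- rewrite RInt_const, scal_R, plus_R. unfold hS; ring.
        -- intros x Hx. rewrite Rmin_left, Rmax_right in Hx by lra. unfold dS. rewrite clamp_ge1 by lra. cbn; ring.
      * apply ex_RInt_continuous; intros; apply dS_cont.
      * apply ex_RInt_continuous; intros; apply dS_cont.
Qed.

Lemma S_derive u : is_derive S u (dS u).
Proof.
  apply (is_derive_ext (fun u => RInt dS 0 u)). { intros; symmetry; apply S_int. }
  apply (is_derive_RInt dS (fun u => RInt dS 0 u) 0 u); [| apply dS_cont].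
  apply filter_forall. intros b. apply (RInt_correct dS 0 b). apply ex_RInt_continuous; intros; apply dS_cont.
Qed.

Lemma S_range u : 0 <= S u <= 1.
Proof. unfold S, hS. pose proof (clamp_range u). set (c := clamp u) in *.
  assert (0 <= c * c) by nra. assert (0 <= (1-c)*(1-c)*(1+2*c)) by (apply Rmult_le_pos; nra).
  split; nra. Qed.
Lemma S_le0 u : u <= 0 -> S u = 0.
Proof. intros; unfold S, hS; rewrite clamp_le0 by lra; ring. Qed.
Lemma S_ge1 u : 1 <= u -> S u = 1.
Proof. intros; unfold S, hS; rewrite clamp_ge1 by lra; ring. Qed.
Lemma S_mono x y : x <= y -> S x <= S y.
Proof.
  intros H. unfold S, hS. pose proof (clamp_mono x y H). pose proof (clamp_range x). pose proof (clamp_range y).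
  set (a := clamp x) in *. set (b := clamp y) in *.
  assert (0 <= (b - a) * (3 * (a + b) - 2 * (a*a + a*b + b*b))).
  { apply Rmult_le_pos; [lra|]. nra. }
  nra.
Qed.

Definition per (g : R -> R) x := g (x - IZR (Int_part x)).

Lemma Int_part_unique k x : IZR k <= x < IZR k + 1 -> Int_part x = k.
Proof.
  intros H. unfold Int_part.
  rewrite <- (tech_up x (k + 1)); [lia| |]; rewrite plus_IZR; lra.
Qed.

Lemma Int_part_range x : IZR (Int_part x) <= x < IZR (Int_part x) + 1.
Proof. pose proof (base_Int_part x). lra. Qed.

Lemma per_periodic g x : per g (x + 1) = per g x.
Proof.
  unfold per. pose proof (Int_part_range x).
  rewrite (Int_part_unique (Int_part x + 1) (x + 1)).
  - rewrite plus_IZR. f_equal. ring.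
  - rewrite plus_IZR. lra.
Qed.

Lemma per_loc g e : 0 < e -> e <= 1 -> (forall t, -e < t < 0 -> g t = g (t + 1)) ->
  forall (k : Z) y, IZR k - e < y < IZR k + 1 -> per g y = g (y - IZR k).
Proof.
  intros He He1 Hg k y Hy. unfold per.
  destruct (Rle_dec (IZR k) y) as [H|H].
  - rewrite (Int_part_unique k y); auto. lra.
  - rewrite (Int_part_unique (k - 1) y).
    + rewrite minus_IZR. rewrite (Hg (y - IZR k)) by lra. f_equal. ring.
    + rewrite minus_IZR. lra.
Qed.

Lemma is_derive_eq (f : R -> R) x d d' : is_derive f x d -> d = d' -> is_derive f x d'.
Proof. intros H <-; exact H. Qed.

Lemma per_derive g dg e : 0 < e -> e <= 1 -> (forall t, -e < t < 0 -> g t = g (t + 1)) ->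
  (forall t, is_derive g t (dg t)) ->
  forall (k : Z) y, IZR k - e < y < IZR k + 1 -> is_derive (per g) y (dg (y - IZR k)).
Proof.
  intros He He1 Hg Hd k y Hy.
  apply (is_derive_ext_loc (fun y => g (y - IZR k))).
  - assert (Ho : open (fun y => IZR k - e < y /\ y < IZR k + 1)) by (apply open_and; [apply open_gt | apply open_lt]).
    specialize (Ho y Hy). eapply filter_imp; [|exact Ho].
    intros z Hz. simpl in Hz. symmetry. apply (per_loc g e); auto.
  - eapply is_derive_eq.
    + apply (is_derive_comp g (fun y => y - IZR k)). apply Hd.
      instantiate (1 := 1). auto_derive; auto; ring.
    + cbn. unfold minus, plus, opp, zero, one, scal; cbn. unfold mult; cbn. ring.
Qed.

Lemma per_Derive g dg e : 0 < e -> e <= 1 -> (forall t, -e < t < 0 -> g t = g (t + 1)) ->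
  (forall t, is_derive g t (dg t)) ->
  forall (k : Z) y, IZR k - e < y < IZR k + 1 -> Derive (per g) y = dg (y - IZR k).
Proof. intros. apply is_derive_unique. apply (per_derive g dg e); auto. Qed.

Lemma per_C11 g dg e M K0 : 0 < e -> e <= 1 -> (forall t, -e < t < 0 -> g t = g (t + 1)) ->
  (forall t, is_derive g t (dg t)) ->
  (forall t, Rabs (dg t) <= M) -> (forall s t, Rabs (dg s - dg t) <= K0 * Rabs (s - t)) ->
  C11 (per g).
Proof.
  intros He He1 Hg Hd HM HK.
  assert (HD : forall y, Derive (per g) y = dg (y - IZR (Int_part y))).
  { intros y. pose proof (Int_part_range y). apply (per_Derive g dg e); auto. lra. }
  assert (HL : forall x y, Rabs (Derive (per g) x - Derive (per g) y) <= (Rabs K0 + 2 * M / e) * Rabs (x - y)).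
  { intros x y.
    assert (M0 : 0 <= M) by (pose proof (HM 0); pose proof (Rabs_pos (dg 0)); lra).
    assert (0 <= 2 * M / e) by (apply Rmult_le_pos; [lra| left; apply Rinv_0_lt_compat; lra]).
    pose proof (Rabs_pos (x - y)).
    assert (HK' : Rabs K0 * Rabs (x - y) <= (Rabs K0 + 2 * M / e) * Rabs (x - y)) by nra.
    destruct (Rlt_dec (Rabs (x - y)) e) as [Hxy|Hxy].
    - destruct (Rle_dec x y) as [Hle|Hle].
      + pose proof (Int_part_range y).
        rewrite (per_Derive g dg e He He1 Hg Hd (Int_part y) x) by (split_Rabs; lra).
        rewrite (per_Derive g dg e He He1 Hg Hd (Int_part y) y) by lra.
        eapply Rle_trans; [apply HK|].
        replace (x - IZR (Int_part y) - (y - IZR (Int_part y))) with (x - y) by ring.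
        eapply Rle_trans; [|exact HK']. apply Rmult_le_compat_r; [lra| apply RRle_abs].
      + pose proof (Int_part_range x).
        rewrite (per_Derive g dg e He He1 Hg Hd (Int_part x) x) by lra.
        rewrite (per_Derive g dg e He He1 Hg Hd (Int_part x) y) by (split_Rabs; lra).
        eapply Rle_trans; [apply HK|].
        replace (x - IZR (Int_part x) - (y - IZR (Int_part x))) with (x - y) by ring.
        eapply Rle_trans; [|exact HK']. apply Rmult_le_compat_r; [lra| apply RRle_abs].
    - rewrite !HD.
      eapply Rle_trans; [apply Rabs_triang|]. rewrite Rabs_Ropp.
      pose proof (HM (x - IZR (Int_part x))). pose proof (HM (y - IZR (Int_part y))).
      assert (2 * M <= 2 * M / e * Rabs (x - y)).
      { unfold Rdiv. rewrite Rmult_assoc. 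
        assert (1 <= / e * Rabs (x - y)).
        { apply (Rmult_le_reg_l e); [lra|]. rewrite <- Rmult_assoc, Rinv_r by lra. lra. }
        nra. }
      pose proof (Rabs_pos K0). nra. }
  split; [split|].
  - pose proof (Int_part_range x). eexists. apply (per_derive g dg e He He1 Hg Hd (Int_part x) x). lra.
  - apply (lip_cont _ _ HL).
  - exists (Rabs K0 + 2 * M / e). exact HL.
Qed.

Lemma S_comp_derive c dl t : 0 < dl -> is_derive (fun t => S ((t - c) / dl)) t (dS ((t - c) / dl) / dl).
Proof.
  intros Hd. eapply is_derive_eq.
  - apply (is_derive_comp S (fun t => (t - c) / dl)). apply S_derive.
    instantiate (1 := / dl). auto_derive; auto. field. lra.
  - rewrite scal_R. cbn. unfold Rdiv. ring.
Qed.

Lemma RInt_lin (g : R -> R) c dl : 0 < dl -> (forall x, continuous g x) ->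
  RInt (fun x => g ((x - c) / dl)) c (c + dl) = dl * RInt g 0 1.
Proof.
  intros Hd Hg.
  assert (E := RInt_comp_lin g (/ dl) (- c / dl) c (c + dl)
     (ex_RInt_continuous _ _ _ (fun z _ => Hg z))).
  replace (/ dl * c + - c / dl) with 0 in E by (field; lra).
  replace (/ dl * (c + dl) + - c / dl) with 1 in E by (field; lra).
  rewrite <- E.
  rewrite RInt_scal.
  + unfold scal; simpl; unfold mult; simpl. rewrite (RInt_ext (fun x => g ((x - c) / dl)) (fun y => g (/ dl * y + - c / dl))).
    * cbn. field. lra.
    * intros x _. f_equal. field. lra.
  + apply ex_RInt_continuous. intros z _. apply continuous_comp; [|apply Hg].
    apply (ex_derive_continuous (fun x => / dl * x + - c / dl)). auto_derive. auto.
Qed.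

Lemma S_shift_derive_bound x : Rabs (dS x) <= 2.
Proof. pose proof (dS_range x). rewrite Rabs_right; lra. Qed.

Lemma div_le0 x dl : x <= 0 -> 0 < dl -> x / dl <= 0.
Proof. intros. unfold Rdiv. assert (0 < / dl) by (apply Rinv_0_lt_compat; lra). nra. Qed.
Lemma div_ge1 x dl : dl <= x -> 0 < dl -> 1 <= x / dl.
Proof. intros. assert (x / dl - 1 = (x - dl) / dl) by (field; lra).
  assert (0 <= (x - dl) / dl). { unfold Rdiv. assert (0 < / dl) by (apply Rinv_0_lt_compat; lra). nra. }
  lra. Qed.

Theorem lemma5p1 (G : R -> R) (p1 p2 l : R) :
  C2 G -> coercive G -> p1 < p2 ->
  Derive G p1 < 0 -> 0 < Derive G p2 ->
  let L := Derive G p2 / (Derive G p2 - Derive G p1) in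
  0 < l -> l < Rmin L (1 - L) ->
  exists f : R -> R, classC p1 p2 L l f /\
    RInt (fun x => Derive G (f x)) 0 1 = 0.
Proof.
  intros HC2 _ Hp Ha Hb L Hl HlL.
  assert (HGc : forall x, continuous (Derive G) x) by (intros x; apply (proj1 HC2 x)).
  set (a := Derive G p1) in *. set (b := Derive G p2) in *.
  assert (HLl : l < L) by (eapply Rlt_le_trans; [exact HlL| apply Rmin_l]).
  assert (HLl' : l < 1 - L) by (eapply Rlt_le_trans; [exact HlL| apply Rmin_r]).
  clear HlL.
  assert (HL0 : a * L + b * (1 - L) = 0) by (unfold L; field; lra).
  clearbody L.
  set (gu := fun u => Derive G (p1 + (p2 - p1) * S u)).
  set (gd := fun u => Derive G (p1 + (p2 - p1) * (1 - S u))).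
  assert (Hgu : forall x, continuous gu x).
  { intros x. unfold gu. apply continuous_comp; [|apply HGc].
    apply (ex_derive_continuous (fun u => p1 + (p2 - p1) * S u)).
    apply (ex_derive_plus (fun _ => p1) (fun u => (p2 - p1) * S u)). apply ex_derive_const.
    apply (ex_derive_scal S). exists (dS x). apply S_derive. }
  assert (Hgd : forall x, continuous gd x).
  { intros x. unfold gd. apply continuous_comp; [|apply HGc].
    apply (ex_derive_continuous (fun u => p1 + (p2 - p1) * (1 - S u))).
    apply (ex_derive_plus (fun _ => p1) (fun u => (p2 - p1) * (1 - S u))). apply ex_derive_const.
    apply (ex_derive_scal (fun u => 1 - S u)).
    apply (ex_derive_minus (fun _ => 1) S). apply ex_derive_const. exists (dS x). apply S_derive. }
  set (Rup := RInt gu 0 1). set (Rdn := RInt gd 0 1).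
  set (K := Rup + Rdn - a - b).
  set (q := Rabs K / (b - a)).
  assert (Hq : 0 <= q) by (unfold q; apply Rmult_le_pos; [apply Rabs_pos | left; apply Rinv_0_lt_compat; lra]).
  set (dl := l / (2 * (q + 1))).
  assert (Hdl : 0 < dl) by (unfold dl; apply Rdiv_lt_0_compat; lra).
  assert (Hdlq : dl * (q + 1) = l / 2) by (unfold dl; field; lra).
  set (d := dl * K / (b - a)).
  assert (Hd : Rabs d < l - dl).
  { assert (Rabs d = dl * q).
    { unfold d, q. unfold Rdiv. rewrite !Rabs_mult. rewrite (Rabs_right dl) by lra.
      rewrite (Rabs_right (/ (b - a))). ring. left; apply Rinv_0_lt_compat; lra. }
    nra. }
  assert (Hd1 : - (l - dl) < d < l - dl) by (split_Rabs; lra).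
  clear Hd.
  set (s := (l - dl) / 2 + d / 2). set (s' := (l - dl) / 2 - d / 2).
  set (a1 := L - l + s). set (a2 := 1 - l + s').
  set (f0 := fun t => p1 + (p2 - p1) * (S ((t - a1) / dl) - S ((t - a2) / dl))).
  set (df0 := fun t => (p2 - p1) * (dS ((t - a1) / dl) / dl - dS ((t - a2) / dl) / dl)).
  assert (Hs : 0 < s < l - dl) by (unfold s; lra).
  assert (Hs' : 0 < s' < l - dl) by (unfold s'; lra).
  assert (Ha1 : 0 < a1) by (unfold a1; lra).
  assert (Ha1' : L - l < a1) by (unfold a1; lra).
  assert (Ha12 : a1 + dl < a2) by (unfold a1, a2, s, s'; lra).
  assert (Ha1L : a1 + dl <= L) by (unfold a1; lra).
  assert (Ha2l : 1 - l <= a2) by (unfold a2; lra).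
  assert (Ha21 : a2 + dl < 1) by (unfold a2; lra).
  assert (F_left : forall t, t <= a1 -> f0 t = p1).
  { intros t Ht. unfold f0. rewrite !S_le0; try ring; apply div_le0; lra. }
  assert (F_mid : forall t, a1 + dl <= t <= a2 -> f0 t = p2).
  { intros t Ht. unfold f0. rewrite S_ge1, S_le0; try ring; try apply div_le0; try apply div_ge1; lra. }
  assert (F_right : forall t, a2 + dl <= t -> f0 t = p1).
  { intros t Ht. unfold f0. rewrite !S_ge1; try ring; apply div_ge1; lra. }
  assert (F_up : forall t, t <= a2 -> Derive G (f0 t) = gu ((t - a1) / dl)).
  { intros t Ht. unfold f0, gu. rewrite (S_le0 ((t - a2) / dl)) by (apply div_le0; lra). f_equal. ring. }
  assert (F_dn : forall t, a1 + dl <= t -> Derive G (f0 t) = gd ((t - a2) / dl)).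
  { intros t Ht. unfold f0, gd. rewrite (S_ge1 ((t - a1) / dl)) by (apply div_ge1; lra). f_equal. }
  assert (F_range : forall t, p1 <= f0 t <= p2).
  { intros t. unfold f0. pose proof (S_range ((t - a1) / dl)). pose proof (S_range ((t - a2) / dl)).
    assert (S ((t - a2) / dl) <= S ((t - a1) / dl)).
    { apply S_mono. unfold Rdiv. apply Rmult_le_compat_r; [left; apply Rinv_0_lt_compat|]; lra. }
    nra. }
  assert (F_der : forall t, is_derive f0 t (df0 t)).
  { intros t. unfold f0, df0. auto_derive.
    - repeat split; eexists; apply S_derive.
    - rewrite !(is_derive_unique S _ _ (S_derive _)). unfold Rminus, Rdiv. ring. }
  set (e := Rmin a1 (1 - a2 - dl)).
  assert (He : 0 < e) by (unfold e; apply Rmin_glb_lt; lra).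
  assert (He1 : e <= 1) by (unfold e; eapply Rle_trans; [apply Rmin_r| lra]).
  assert (He' : e <= a1 /\ e <= 1 - a2 - dl) by (unfold e; split; [apply Rmin_l | apply Rmin_r]).
  assert (Hshift : forall t, - e < t < 0 -> f0 t = f0 (t + 1)).
  { intros t Ht. rewrite F_left by lra. rewrite F_right by lra. reflexivity. }
  assert (Hloc : forall y, - e < y < 1 -> per f0 y = f0 y).
  { intros y Hy. rewrite (per_loc f0 e He He1 Hshift 0 y) by (simpl; lra). f_equal. simpl; ring. }
  exists (per f0). split.
  - split; [|split; [|split; [|split]]].
    + intros x. apply per_periodic.
    + apply (per_C11 f0 df0 e ((p2 - p1) * (2 * / dl)) ((p2 - p1) * (12 * (/ dl * / dl))) He He1 Hshift F_der).
      * intros t. unfold df0. assert (Hi : 0 < / dl) by (apply Rinv_0_lt_compat; lra).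
        pose proof (dS_range ((t - a1) / dl)). pose proof (dS_range ((t - a2) / dl)).
        set (A := dS ((t - a1) / dl)) in *. set (B := dS ((t - a2) / dl)) in *.
        replace (A / dl - B / dl) with ((A - B) * / dl) by (unfold Rdiv; ring).
        rewrite !Rabs_mult. rewrite (Rabs_right (p2 - p1)) by lra. rewrite (Rabs_right (/ dl)) by lra.
        assert (Rabs (A - B) <= 2) by (split_Rabs; lra).
        pose proof (Rabs_pos (A - B)).
        apply Rmult_le_compat_l; [lra|]. nra.
      * intros x y. unfold df0. assert (Hi : 0 < / dl) by (apply Rinv_0_lt_compat; lra).
        pose proof (dS_lip ((x - a1) / dl) ((y - a1) / dl)).
        pose proof (dS_lip ((x - a2) / dl) ((y - a2) / dl)).
        replace ((x - a1) / dl - (y - a1) / dl) with ((x - y) * / dl) in * by (unfold Rdiv; ring).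
        replace ((x - a2) / dl - (y - a2) / dl) with ((x - y) * / dl) in * by (unfold Rdiv; ring).
        rewrite Rabs_mult, (Rabs_right (/ dl)) in * by lra.
        set (A1 := dS ((x - a1) / dl)) in *. set (A2 := dS ((y - a1) / dl)) in *.
        set (B1 := dS ((x - a2) / dl)) in *. set (B2 := dS ((y - a2) / dl)) in *.
        replace ((p2 - p1) * (A1 / dl - B1 / dl) - (p2 - p1) * (A2 / dl - B2 / dl))
          with ((p2 - p1) * / dl * ((A1 - A2) - (B1 - B2))) by (unfold Rdiv; ring).
        rewrite !Rabs_mult. rewrite (Rabs_right (p2 - p1)) by lra. rewrite (Rabs_right (/ dl)) by lra.
        assert (Rabs (A1 - A2 - (B1 - B2)) <= 12 * (Rabs (x - y) * / dl)).
        { eapply Rle_trans; [apply Rabs_triang|]. rewrite Rabs_Ropp. lra. }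
        assert (0 <= (p2 - p1) * / dl) by nra.
        replace ((p2 - p1) * (12 * (/ dl * / dl)) * Rabs (x - y)) with ((p2 - p1) * / dl * (12 * (Rabs (x - y) * / dl))) by ring.
        apply Rmult_le_compat_l; lra.
    + intros x. unfold per. apply F_range.
    + intros x Hx. rewrite Hloc by lra. apply F_left. lra.
    + intros x Hx. rewrite Hloc by lra. apply F_mid. lra.
  - set (H := fun x => Derive G (f0 x)).
    assert (HH : forall x, continuous H x).
    { intros x. unfold H. apply continuous_comp; [|apply HGc].
      apply (ex_derive_continuous f0). eexists; apply F_der. }
    assert (Hex : forall u v, ex_RInt H u v) by (intros; apply (ex_RInt_continuous H); intros; apply HH).
    rewrite (RInt_ext _ H) by (intros x Hx; rewrite Rmin_left, Rmax_right in Hx by lra; unfold H; rewrite Hloc by lra; reflexivity).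
    rewrite <- (RInt_Chasles H 0 a1 1), <- (RInt_Chasles H a1 (a1 + dl) 1), <- (RInt_Chasles H (a1 + dl) a2 1),
      <- (RInt_Chasles H a2 (a2 + dl) 1) by apply Hex.
    rewrite !plus_R.
    rewrite (RInt_ext H (fun _ => a) 0 a1) by (intros x Hx; rewrite Rmin_left, Rmax_right in Hx by lra; unfold H; rewrite F_left by lra; reflexivity).
    rewrite (RInt_ext H (fun x => gu ((x - a1) / dl)) a1 (a1 + dl)) by (intros x Hx; rewrite Rmin_left, Rmax_right in Hx by lra; unfold H; rewrite F_up by lra; reflexivity).
    rewrite (RInt_ext H (fun _ => b) (a1 + dl) a2) by (intros x Hx; rewrite Rmin_left, Rmax_right in Hx by lra; unfold H; rewrite F_mid by lra; reflexivity).
    rewrite (RInt_ext H (fun x => gd ((x - a2) / dl)) a2 (a2 + dl)) by (intros x Hx; rewrite Rmin_left, Rmax_right in Hx by lra; unfold H; rewrite F_dn by lra; reflexivity).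
    rewrite (RInt_ext H (fun _ => a) (a2 + dl) 1) by (intros x Hx; rewrite Rmin_left, Rmax_right in Hx by lra; unfold H; rewrite F_right by lra; reflexivity).
    rewrite !RInt_const, !scal_R.
    rewrite (RInt_lin gu a1 dl Hdl Hgu), (RInt_lin gd a2 dl Hdl Hgd).
    fold Rup Rdn.
    replace Rdn with (K + a + b - Rup) by (unfold K; ring).
    transitivity (a * L + b * (1 - L) + (d * (a - b) + dl * K)).
    + clearbody Rup Rdn. unfold scal, plus; cbn. unfold mult; cbn. unfold a1, a2, s, s'. match goal with |- ?x = ?y => change (@eq R x y) end. field.
    + match goal with |- ?x = ?y => change (@eq R x y) end. rewrite HL0. unfold d. field. lra.
Qed.
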